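(* Let $R=\bigoplus_{s\in S}R_s$ be an $S$-graded ring inducing $S$ which is graded von Neumann regular. Then: (i) every homogeneous right (resp. left) ideal $I$ of $R$ satisfies $I^2=I$; (ii) every homogeneous two-sided ideal of $R$ is graded semiprime. If moreover $R$ is nearly epsilon-strongly graded, then: (iii) the graded Jacobson radical $J^g(R)$ is zero.
   Context: Rings are associative, not necessarily unital. $S$-graded ring inducing $S$: $S$ a partial groupoid, $R=\bigoplus_{s\in S}R_s$, $R_sR_t\subseteq R_{st}$ when $st$ defined, $R_sR_t\ne0$ implies $st$ defined. Convention: $0\in S$, $R_0=0$, $S\setminus\{0\}=\{s:R_s\ne0\}$, undefined products set to $0$, $0$ absorbing. $H_R=\bigcup_sR_s$. An ideal $J$ is homogeneous if $J=\bigoplus_s(J\cap R_s)$. A homogeneous two-sided ideal $P$ is graded semiprime if for every homogeneous two-sided ideal $I$ and positive integer $n$, $I^n\subseteq P$ implies $I\subseteq P$. $R$ is graded von Neumann regular if $x\in xRx$ for all $x\in H_R$. $S$ cancellative: $0\ne su=tu$ or $0\ne us=ut$ implies $s=t$. (LRI): for every $s$ there exist $s^{-1}$ and idempotents $e,f$ with $es=sf=s$, $fs^{-1}=s^{-1}e=s^{-1}$, $ss^{-1}=e$, $s^{-1}s=f$. $R$ is nearly epsilon-strongly graded if $S$ is cancellative, satisfies (LRI), and for every $s$ and $x\in R_s$ there exist $\epsilon(x)\in R_sR_{s^{-1}}$, $\epsilon'(x)\in R_{s^{-1}}R_s$ (additive subgroups generated by products) with $\epsilon(x)x=x=x\epsilon'(x)$.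 Graded Jacobson radical (for cancellative $S$): a homogeneous right ideal $M$ is graded modular if there is $u\in H_R$ with $ux-x\in M$ for all $x\in H_R$; a graded maximal modular right ideal is a graded modular right ideal that is maximal among proper homogeneous right ideals; $J^g(R)$ is the intersection of all graded maximal modular right ideals (equal to $R$ if there are none). *)

(* Defs.v *)
(* Non-unital associative rings are modelled as a
   zmodType R together with an explicit multiplication `mul`. *)
From mathcomp Require Import all_boot all_order all_algebra.
Set Implicit Arguments. Unset Strict Implicit. Unset Printing Implicit Defensive.
Import GRing.Theory.
Local Open Scope ring_scope.

Section Graded.
Variables (R : zmodType) (mul : R -> R -> R).

Definition nu_ring : Prop :=
  [/\ (forall x y z, mul x (mul y z) = mul (mul x y) z),
      (forall x y z, mul (x + y) z = mul x z + mul y z) &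
      (forall x y z, mul x (y + z) = mul x y + mul x z)].

Inductive gen_prod (A B : R -> Prop) : R -> Prop :=
| gen_prod0 : gen_prod A B 0
| gen_prodM a b : A a -> B b -> gen_prod A B (mul a b)
| gen_prodD x y : gen_prod A B x -> gen_prod A B y -> gen_prod A B (x + y)
| gen_prodN x : gen_prod A B x -> gen_prod A B (- x).

Definition add_subgroup (I : R -> Prop) : Prop :=
  [/\ I 0, (forall x y, I x -> I y -> I (x + y)) & (forall x, I x -> I (- x))].

Definition right_ideal (I : R -> Prop) : Prop :=
  add_subgroup I /\ (forall x r, I x -> I (mul x r)).
Definition left_ideal (I : R -> Prop) : Prop :=
  add_subgroup I /\ (forall x r, I x -> I (mul r x)).
Definition twosided_ideal (I : R -> Prop) : Prop :=
  right_ideal I /\ left_ideal I.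

Fixpoint idpow (I : R -> Prop) (n : nat) : R -> Prop :=
  match n with
  | 0 => fun _ => True
  | 1 => I
  | n'.+1 => gen_prod (idpow I n') I
  end.

Variables (S : eqType) (op : S -> S -> S) (z : S) (Rs : S -> R -> Prop).
(* S : partial groupoid, with undefined products set to the absorbing z = 0;
   Rs s = the homogeneous component R_s *)

Definition direct_sum_decomp : Prop :=
  (forall x : R, exists (ss : seq S) (f : S -> R),
      [/\ uniq ss, (forall s, Rs s (f s)) & x = \sum_(s <- ss) f s]) /\
  (forall (ss : seq S) (f : S -> R), uniq ss -> (forall s, Rs s (f s)) ->
      \sum_(s <- ss) f s = 0 -> forall s, s \in ss -> f s = 0).

Definition graded_ring_inducing : Prop :=
  nu_ring /\
  (forall s, op z s = z /\ op s z = z) /\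
  (forall s, add_subgroup (Rs s)) /\
  direct_sum_decomp /\
  (forall s t x y, Rs s x -> Rs t y -> Rs (op s t) (mul x y)) /\
  (forall s t, (exists x y, [/\ Rs s x, Rs t y & mul x y <> 0]) -> op s t <> z) /\
  (forall x, Rs z x -> x = 0) /\
  (forall s, s <> z <-> exists x, Rs s x /\ x <> 0).

Definition homog_elt (x : R) : Prop := exists s, Rs s x.

Definition homogeneous (J : R -> Prop) : Prop :=
  forall x, J x -> exists (ss : seq S) (f : S -> R),
      [/\ uniq ss, (forall s, Rs s (f s) /\ J (f s)) & x = \sum_(s <- ss) f s].

Definition graded_semiprime (P : R -> Prop) : Prop :=
  homogeneous P /\ twosided_ideal P /\
  forall I n, homogeneous I -> twosided_ideal I -> (0 < n)%N ->
    (forall x, idpow I n x -> P x) -> forall x, I x -> P x.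

Definition graded_vnr : Prop :=
  forall x, homog_elt x -> exists r, x = mul (mul x r) x.

Definition cancellative : Prop :=
  forall s t u, (op s u <> z -> op s u = op t u -> s = t) /\
                (op u s <> z -> op u s = op u t -> s = t).

Definition idempotent (e : S) : Prop := op e e = e.

Definition LRI_with (inv : S -> S) : Prop :=
  forall s, exists e f, [/\ idempotent e, idempotent f,
    op e s = s /\ op s f = s, op f (inv s) = inv s /\ op (inv s) e = inv s &
    op s (inv s) = e /\ op (inv s) s = f].

Definition nearly_eps_strongly : Prop :=
  cancellative /\ exists inv : S -> S, LRI_with inv /\
    forall s x, Rs s x ->
      exists ex ex', [/\ gen_prod (Rs s) (Rs (inv s)) ex,
                         gen_prod (Rs (inv s)) (Rs s) ex',
                         mul ex x = x & mul x ex' = x].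

Definition graded_modular (M : R -> Prop) : Prop :=
  homogeneous M /\ right_ideal M /\
  exists u, homog_elt u /\ forall x, homog_elt x -> M (mul u x - x).

Definition proper (M : R -> Prop) : Prop := exists x, ~ M x.

Definition graded_max_modular (M : R -> Prop) : Prop :=
  graded_modular M /\ proper M /\
  forall N, homogeneous N -> right_ideal N -> proper N ->
    (forall x, M x -> N x) -> forall x, N x <-> M x.

Definition graded_jacobson (x : R) : Prop :=
  forall M, graded_max_modular M -> M x.

End Graded.

(* Main.v *)
Require Import Defs.
From mathcomp Require Import all_boot all_order all_algebra.
From mathcomp Require Import boolp classical_sets.
Set Implicit Arguments. Unset Strict Implicit. Unset Printing Implicit Defensive.
Import GRing.Theory.
Local Open Scope ring_scope.

Section Proof.
Variables (R : zmodType) (mul : R -> R -> R)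
  (S : eqType) (op : S -> S -> S) (z : S) (Rs : S -> R -> Prop).
Hypothesis HG : graded_ring_inducing mul op z Rs.

Lemma massoc x y w : mul x (mul y w) = mul (mul x y) w.
Proof. by case: HG => [[A _ _] _]. Qed.
Lemma mDl x y w : mul (x + y) w = mul x w + mul y w.
Proof. by case: HG => [[_ A _] _]. Qed.
Lemma mDr x y w : mul x (y + w) = mul x y + mul x w.
Proof. by case: HG => [[_ _ A] _]. Qed.
Lemma m0l y : mul 0 y = 0.
Proof. by apply/(addrI (mul 0 y)); rewrite -mDl !addr0. Qed.
Lemma m0r y : mul y 0 = 0.
Proof. by apply/(addrI (mul y 0)); rewrite -mDr !addr0. Qed.
Lemma mNl x y : mul (- x) y = - mul x y.
Proof. by apply/eqP; rewrite -addr_eq0 -mDl addNr m0l. Qed.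
Lemma mNr x y : mul y (- x) = - mul y x.
Proof. by apply/eqP; rewrite -addr_eq0 -mDr addNr m0r. Qed.
Lemma mBl x y w : mul (x - y) w = mul x w - mul y w.
Proof. by rewrite mDl mNl. Qed.
Lemma mBr x y w : mul w (x - y) = mul w x - mul w y.
Proof. by rewrite mDr mNr. Qed.

Lemma add_sum (F : R -> R) (I : Type) (r : seq I) (G : I -> R) :
  (forall a b, F (a + b) = F a + F b) ->
  F (\sum_(i <- r) G i) = \sum_(i <- r) F (G i).
Proof.
move=> FD; have F0 : F 0 = 0 by apply/(addrI (F 0)); rewrite -FD !addr0.
elim: r => [|a r IH]; first by rewrite !big_nil.
by rewrite !big_cons FD IH.
Qed.

Lemma Rs0 s : Rs s 0.
Proof. case: HG => [_ [_ [A _]]]; by case: (A s) => a b c. Qed.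
Lemma RsD s x y : Rs s x -> Rs s y -> Rs s (x + y).
Proof. case: HG => [_ [_ [A _]]]; case: (A s) => a b c; exact: b. Qed.
Lemma RsN s x : Rs s x -> Rs s (- x).
Proof. case: HG => [_ [_ [A _]]]; case: (A s) => a b c; exact: c. Qed.
Lemma RsB s x y : Rs s x -> Rs s y -> Rs s (x - y).
Proof. by move=> ? ?; apply: RsD => //; apply: RsN. Qed.
Lemma RsM s t x y : Rs s x -> Rs t y -> Rs (op s t) (mul x y).
Proof. by case: HG => [_ [_ [_ [_ [A _]]]]]; apply: A. Qed.
Lemma Rsz x : Rs z x -> x = 0.
Proof. by case: HG => [_ [_ [_ [_ [_ [_ [A _]]]]]]]; apply: A. Qed.
Lemma opz s : op z s = z /\ op s z = z.
Proof. by case: HG => [_ [A _]]. Qed.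
Lemma dec_ex0 x : exists (ss : seq S) (f : S -> R),
      [/\ uniq ss, (forall s, Rs s (f s)) & x = \sum_(s <- ss) f s].
Proof. by case: HG => [_ [_ [_ [[A _] _]]]]. Qed.
Lemma zero_sum (ss : seq S) (f : S -> R) : uniq ss -> (forall s, Rs s (f s)) ->
      \sum_(s <- ss) f s = 0 -> forall s, s \in ss -> f s = 0.
Proof. by case: HG => [_ [_ [_ [[_ A] _]]]]; apply: A. Qed.

Definition ext (ss : seq S) (f : S -> R) t := if t \in ss then f t else 0.

Lemma ext_R ss f t : (forall s, Rs s (f s)) -> Rs t (ext ss f t).
Proof. by rewrite /ext; case: ifP => // _ _; apply: Rs0. Qed.

Lemma sum_ext (ss L : seq S) f : uniq ss -> uniq L -> {subset ss <= L} ->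
  \sum_(t <- L) ext ss f t = \sum_(t <- ss) f t.
Proof.
move=> uss uL sub; rewrite /ext -big_mkcond /= -big_filter.
apply: perm_big; apply: uniq_perm => //; first exact: filter_uniq.
move=> t; rewrite mem_filter; case E: (t \in ss) => //=; exact: sub E.
Qed.

Lemma dec_uniq ss f ss' f' : uniq ss -> uniq ss' -> (forall s, Rs s (f s)) ->
  (forall s, Rs s (f' s)) -> \sum_(s <- ss) f s = \sum_(s <- ss') f' s ->
  forall t, ext ss f t = ext ss' f' t.
Proof.
move=> u u' Rf Rf' E.
set L := undup (ss ++ ss').
have uL : uniq L := undup_uniq _.
have s1 : {subset ss <= L} by move=> t ht; rewrite mem_undup mem_cat ht.
have s2 : {subset ss' <= L} by move=> t ht; rewrite mem_undup mem_cat ht orbT.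
have Rg t : Rs t (ext ss f t - ext ss' f' t) by apply: RsB; apply: ext_R.
have H0 : \sum_(t <- L) (ext ss f t - ext ss' f' t) = 0.
  by rewrite sumrB !sum_ext // E subrr.
move=> t; case: (boolP (t \in L)) => tL.
  by apply/eqP; rewrite -subr_eq0; apply/eqP; exact: (zero_sum uL Rg H0 tL).
rewrite /ext; move: tL; rewrite mem_undup mem_cat negb_or => /andP[/negbTE -> /negbTE ->].
by [].
Qed.

Lemma dec_ex x : exists p : seq S * (S -> R),
  [/\ uniq p.1, (forall s, Rs s (p.2 s)) & x = \sum_(s <- p.1) p.2 s].
Proof. by case: (dec_ex0 x) => ss [f H]; exists (ss, f). Qed.

Definition dec (x : R) : seq S * (S -> R) := proj1_sig (cid (dec_ex x)).
Lemma decP x : [/\ uniq (dec x).1, (forall s, Rs s ((dec x).2 s)) &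
   x = \sum_(s <- (dec x).1) (dec x).2 s].
Proof. exact: (proj2_sig (cid (dec_ex x))). Qed.

Definition pi t x := ext (dec x).1 (dec x).2 t.

Lemma pi_R t x : Rs t (pi t x).
Proof. by apply: ext_R; case: (decP x). Qed.

Lemma pi_any x ss f : uniq ss -> (forall s, Rs s (f s)) ->
  x = \sum_(s <- ss) f s -> forall t, pi t x = ext ss f t.
Proof.
move=> u Rf E t; case: (decP x) => u' Rf' E'.
by apply: dec_uniq => //; rewrite -E -E'.
Qed.

Lemma pi_dec x : uniq (dec x).1 /\ x = \sum_(t <- (dec x).1) pi t x /\
   (forall t, t \notin (dec x).1 -> pi t x = 0).
Proof.
case: (decP x) => u Rf E; split=> //; split.
  by rewrite /pi sum_ext.
by move=> t tn; rewrite /pi /ext (negbTE tn).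
Qed.

Lemma pi_hom s x t : Rs s x -> pi t x = if t == s then x else 0.
Proof.
move=> Rx; rewrite (@pi_any x [:: s] (fun t => if t == s then x else 0)) //.
- by rewrite /ext inE; case: eqP.
- by move=> u; case: eqP => [->|_] //; apply: Rs0.
- by rewrite big_seq1 eqxx.
Qed.

Lemma pi_z x : pi z x = 0.
Proof. exact: Rsz (pi_R z x). Qed.

Lemma pi_add t x y : pi t (x + y) = pi t x + pi t y.
Proof.
case: (decP x) => u Rf E; case: (decP y) => u' Rf' E'.
set ss := (dec x).1 in u Rf E *; set ss' := (dec y).1 in u' Rf' E' *.
set L := undup (ss ++ ss').
have uL : uniq L := undup_uniq _.
have s1 : {subset ss <= L} by move=> v hv; rewrite mem_undup mem_cat hv.
have s2 : {subset ss' <= L} by move=> v hv; rewrite mem_undup mem_cat hv orbT.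
rewrite (@pi_any (x + y) L (fun v => pi v x + pi v y)) //.
- rewrite /ext; case: ifP => // /negbT; rewrite mem_undup mem_cat negb_or.
  by case/andP=> h1 h2; rewrite /pi /ext (negbTE h1) (negbTE h2) addr0.
- by move=> v; apply: RsD; apply: pi_R.
- by rewrite big_split /= /pi (sum_ext _ u uL s1) (sum_ext _ u' uL s2) -E -E'.
Qed.

Lemma pi0 t : pi t 0 = 0.
Proof. by apply/(addrI (pi t 0)); rewrite -pi_add !addr0. Qed.

Lemma pi_eq0 x : (forall t, pi t x = 0) -> x = 0.
Proof.
case: (pi_dec x) => _ [E _] H; rewrite E big1 // => t _; exact: H.
Qed.

Lemma sum_delta (ss : seq S) (i : S) (c : R) : uniq ss ->
  \sum_(t <- ss) (if t == i then c else 0) = if i \in ss then c else 0.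
Proof.
elim: ss => [|a ss IH] /=; first by rewrite big_nil.
case/andP=> an u; rewrite big_cons IH // inE.
case: (eqVneq a i) => [<-|ne] /=; first by rewrite (negbTE an) addr0 ?eqxx.
by rewrite add0r.
Qed.

Lemma pi_F (F : R -> R) (D : S -> S) t y :
  (forall a b, F (a + b) = F a + F b) ->
  (forall t' w, Rs t' w -> Rs (D t') (F w)) ->
  (forall t', D t' = D t -> D t <> z -> t' = t) ->
  pi (D t) (F y) = F (pi t y).
Proof.
move=> FD FR Dinj.
have F0 : F 0 = 0 by apply/(addrI (F 0)); rewrite -FD !addr0.
case: (eqVneq (D t) z) => [Dz|Dnz].
  by rewrite Dz pi_z; apply/esym/Rsz; rewrite -Dz; apply: FR; apply: pi_R.
case: (pi_dec y) => u [E N].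
rewrite {1}E (add_sum _ _ FD) (add_sum _ _ (pi_add (D t))).
rewrite (eq_bigr (fun t' => if t' == t then F (pi t y) else 0)).
  rewrite sum_delta //; case: ifP => // /negbT tn; by rewrite N // F0.
move=> t' _; rewrite (pi_hom _ (FR _ _ (pi_R t' y))).
case: (eqVneq t' t) => [->|ne]; first by rewrite eqxx.
case: eqP => // /esym h; exfalso; by rewrite (Dinj t' h (elimN eqP Dnz)) eqxx in ne.
Qed.


Definition hom' (J : R -> Prop) := forall y, J y -> forall t, J (pi t y).

Lemma hom_hom' J : homogeneous Rs J -> J 0 -> hom' J.
Proof.
move=> H J0 y Jy t; case: (H y Jy) => ss [f [u Rf E]].
rewrite (pi_any u (fun s => proj1 (Rf s)) E) /ext; case: ifP => // _.
exact: (proj2 (Rf t)).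
Qed.

Lemma hom'_hom J : hom' J -> homogeneous Rs J.
Proof.
move=> H y Jy; exists (dec y).1, (fun t => pi t y).
case: (pi_dec y) => u [E _]; split=> // s; split; [exact: pi_R | exact: H].
Qed.

Lemma sum_P (P : R -> Prop) (ss : seq S) (f : S -> R) : P 0 ->
  (forall a b, P a -> P b -> P (a + b)) -> (forall s, P (f s)) ->
  P (\sum_(s <- ss) f s).
Proof. by move=> P0 PD Pf; apply: big_ind. Qed.

Hypothesis Hvnr : graded_vnr mul Rs.

Lemma part1 I : homogeneous Rs I -> right_ideal mul I ->
         forall x, gen_prod mul I I x <-> I x.
Proof.
move=> H [[I0 ID IN] IM] x; split.
  by elim=> [|a b Ia _|a b _ Ia _ Ib|a _ Ia]; [|apply: IM|apply: ID|apply: IN].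
case/H=> ss [f [u Rf ->]]; apply: sum_P; [exact: gen_prod0|exact: gen_prodD|].
move=> s; case: (Rf s) => Rfs Ifs.
case: (Hvnr (ex_intro _ s Rfs)) => r ->.
by apply: gen_prodM => //; apply: IM.
Qed.

Lemma part2 I : homogeneous Rs I -> left_ideal mul I ->
         forall x, gen_prod mul I I x <-> I x.
Proof.
move=> H [[I0 ID IN] IM] x; split.
  by elim=> [|a b _ Ib|a b _ Ia _ Ib|a _ Ia]; [|apply: IM|apply: ID|apply: IN].
case/H=> ss [f [u Rf ->]]; apply: sum_P; [exact: gen_prod0|exact: gen_prodD|].
move=> s; case: (Rf s) => Rfs Ifs.
case: (Hvnr (ex_intro _ s Rfs)) => r ->.
by rewrite -massoc; apply: gen_prodM => //; apply: IM.
Qed.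

Lemma idpow_sub I : homogeneous Rs I -> right_ideal mul I ->
  forall m x, I x -> idpow mul I m.+1 x.
Proof.
move=> H [[I0 ID IN] IM]; elim=> [//|m IH] x /H [ss [f [u Rf ->]]].
change (gen_prod mul (idpow mul I m.+1) I (\sum_(s <- ss) f s)).
apply: sum_P; [exact: gen_prod0|exact: gen_prodD|].
move=> s; case: (Rf s) => Rfs Ifs.
case: (Hvnr (ex_intro _ s Rfs)) => r ->.
by apply: gen_prodM => //; apply: IH; apply: IM.
Qed.

Lemma part3 P : homogeneous Rs P -> twosided_ideal mul P ->
         graded_semiprime mul Rs P.
Proof.
move=> HP TP; split=> //; split=> // I n HI [RI LI] n0 Hn x Ix.
apply: Hn; case: n n0 => // m _; exact: idpow_sub.
Qed.

Lemma exists_M (w : R) s (inv : S -> S) : Rs s w -> w <> 0 ->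
  cancellative op z -> LRI_with op inv ->
  exists M, graded_max_modular mul Rs M /\ ~ M w.
Proof.
move=> Rw w0 Hc HL.
have sz : s <> z by move=> E; apply: w0; apply: Rsz; rewrite -E.
case: (Hvnr (ex_intro _ s Rw)) => r Er.
case: (HL s) => e [f [ie _ [es _] _ [ses _]]].
have ez : e <> z by move=> E; apply: sz; rewrite -es E; case: (opz s).
pose r' := pi (inv s) r.
have Er' : w = mul (mul w r') w.
  have hD : op (op s (inv s)) s = s by rewrite ses.
  have := @pi_F (fun r => mul (mul w r) w) (fun t => op (op s t) s) (inv s) r.
  rewrite hD -Er (pi_hom _ Rw) eqxx; apply.
  - by move=> a b; rewrite mDr mDl.
  - by move=> t' v Rv; apply: RsM => //; apply: RsM.
  - move=> t' h _.
    have h2 : op s t' = e.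
      by apply: (proj1 (Hc (op s t') e s)); rewrite h // es.
    by apply: (proj2 (Hc t' (inv s) s)); rewrite h2 // ses.
pose E := mul w r'.
have RE : Rs e E by rewrite -ses; apply: RsM => //; apply: pi_R.
have EE : mul E E = E by rewrite /E massoc -Er'.
have Ew : mul E w = w by rewrite /E -Er'.
have E0 : E <> 0 by move=> h; apply: w0; rewrite -Ew h m0l.
pose M0 := fun y => mul E y = 0.
pose good := fun N : R -> Prop => [/\ hom' N, right_ideal mul N & ~ N E].
have gM0 : good M0.
  split.
  - move=> y Ey t; rewrite /M0.
    have := @pi_F (mul E) (op e) t y (mDr E) (fun t' v Rv => RsM RE Rv).
    rewrite Ey pi0 => <- //.
    move=> t' h hz; apply: (proj2 (Hc t' t e)) => //; by rewrite h.
  - split; first split.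
    + exact: m0r.
    + by move=> a b ha hb; rewrite /M0 mDr ha hb addr0.
    + by move=> a ha; rewrite /M0 mNr ha oppr0.
    by move=> a b ha; rewrite /M0 massoc ha m0l.
  - by rewrite /M0 EE.
have good_ext N N' : (forall y, N y <-> N' y) -> good N -> good N'.
  move=> eqN [h [[a0 aD aN] aM] nE]; split.
  - by move=> y /eqN Ny t; apply/eqN; apply: h.
  - split; first split.
    + exact/eqN.
    + by move=> a b /eqN ha /eqN hb; apply/eqN; apply: aD.
    + by move=> a /eqN ha; apply/eqN; apply: aN.
    by move=> a b /eqN ha; apply/eqN; apply: aM.
  - by move/eqN.
pose P := fun A : set R => good (fun y => A y \/ M0 y).
have [A [PA Amax]] : exists A, P A /\ forall B, classical_sets.proper A B -> ~ P B.
  apply: Zorn_bigcup => F FP Ftot.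
  pose N := fun y => bigcup F (fun X => X) y \/ M0 y.
  have key y1 y2 : N y1 -> N y2 -> exists N', [/\ good N', (forall y, N' y -> N y),
       N' y1 & N' y2].
    have sub X : F X -> forall y, X y \/ M0 y -> N y.
      by move=> FX y [Xy|My]; [left; exists X|right].
    case=> [[X FX Xy1]|M1]; case=> [[Y FY Yy2]|M2].
    - case: (Ftot X Y FX FY) => XY.
        exists (fun y => Y y \/ M0 y); split; [exact: FP|exact: sub|left; exact: XY|by left].
      exists (fun y => X y \/ M0 y); split; [exact: FP|exact: sub|by left|left; exact: XY].
    - by exists (fun y => X y \/ M0 y); split; [exact: FP|exact: sub|left|right].
    - by exists (fun y => Y y \/ M0 y); split; [exact: FP|exact: sub|right|left].
    - exists M0; split => //; by move=> y My; right.
  rewrite /P; split.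
  - move=> y Ny t; case: (key y y Ny Ny) => N' [[h _ _] sN N'y _].
    by apply: sN; apply: h.
  - split; first split.
    + by right; apply: m0r.
    + move=> a b ha hb; case: (key a b ha hb) => N' [[_ [[_ D _] _] _] sN h1 h2].
      by apply: sN; apply: D.
    + move=> a ha; case: (key a a ha ha) => N' [[_ [[_ _ Nn] _] _] sN h1 _].
      by apply: sN; apply: Nn.
    move=> a b ha; case: (key a a ha ha) => N' [[_ [_ Mm] _] sN h1 _].
    by apply: sN; apply: Mm.
  - move=> NE; case: (key E E NE NE) => N' [[_ _ nE] _ h _]; exact: nE.
pose M := fun y => A y \/ M0 y.
case: PA => [hM [[M0' MD MN] MM] nME].
have Mw : ~ M w.
  move=> Mw; apply: nME; exact: MM.
exists M; split=> //; split; [split; [|split]|split].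
- exact: hom'_hom.
- by split; first split.
- exists E; split; first by exists e.
  by move=> y _; right; rewrite /M0 mBr massoc EE subrr.
- by exists E.
move=> N hN [[N0 ND NN] NM] [v nv] MsN y; split; last exact: MsN.
move=> Ny; case: (pselect (M y)) => // nMy; exfalso.
have nNE : ~ N E.
  move=> NE; apply: nv; have -> : v = mul E v - (mul E v - v) by rewrite subKr.
  apply: ND; first exact: NM.
  by apply: NN; apply: MsN; right; rewrite /M0 mBr massoc EE subrr.
apply: (Amax N).
  split; first by move=> u Au; apply: MsN; left.
  by move=> NA; apply: nMy; left; apply: NA.
apply: (good_ext N); first by move=> u; split; [left|case=> //; move=> h; apply: MsN; right].
split=> //; exact: hom_hom'.
Qed.

Lemma part4 : nearly_eps_strongly mul op z Rs ->
  forall x, graded_jacobson mul Rs x -> x = 0.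
Proof.
case=> Hc [inv [HL _]] x Jx; apply: pi_eq0 => t.
case: (eqVneq (pi t x) 0) => // ne; exfalso.
have [M [HM nM]] := exists_M (pi_R t x) (elimN eqP ne) Hc HL.
apply: nM; have Mx := Jx M HM.
case: HM => [[hM [[[M0 _ _] _] _]] _].
exact: (hom_hom' hM M0 Mx).
Qed.

End Proof.

Theorem proposition4p9 (R : zmodType) (mul : R -> R -> R)
  (S : eqType) (op : S -> S -> S) (z : S) (Rs : S -> R -> Prop) :
  graded_ring_inducing mul op z Rs ->
  graded_vnr mul Rs ->
  [/\ (forall I, homogeneous Rs I -> right_ideal mul I ->
         forall x, gen_prod mul I I x <-> I x),
      (forall I, homogeneous Rs I -> left_ideal mul I ->
         forall x, gen_prod mul I I x <-> I x),
      (forall P, homogeneous Rs P -> twosided_ideal mul P ->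
         graded_semiprime mul Rs P) &
      (nearly_eps_strongly mul op z Rs ->
         forall x, graded_jacobson mul Rs x -> x = 0)].
Proof.
move=> HG Hv; split.
- move=> I hI rI x; apply: (@part1 _ _ _ _ Hv I hI rI x).
- move=> I hI rI x; apply: (@part2 _ _ _ _ _ _ HG Hv I hI rI x).
- move=> P hP tP; apply: (@part3 _ _ _ _ Hv P hP tP).
- move=> hN x Jx; apply: (@part4 _ _ _ _ _ _ HG Hv hN x Jx).
Qed.
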